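(* Let $H$ be a connected finite simple graph with $|V(H)|\geqslant 4$ that contains no chorded cycle and no Hamiltonian path. Let $P_1=u_1u_2\cdots u_p$ be a longest path in $H$, with $p\geqslant 3$, and let $P_2=v_1v_2\cdots v_q$ be a longest path in $H-V(P_1)$, with $q\geqslant 1$. Suppose $d_{P_1}(v_1)\leqslant d_{P_1}(v_q)$. Then at least one of the following holds: (1) $q\leqslant 2$ and $V(H)=V(P_1)\cup V(P_2)$; (2) $q\geqslant 3$ and $d_H(v_1)=1$; (3) there exists a vertex $w\in V(H)\setminus (V(P_1)\cup\{v_1\})$ such that $d_H(w)\leqslant 2$, $u_1w\notin E(H)$, $u_pw\notin E(H)$, and $w$ is not a cut-vertex of $H$.
   Context: A chord of a cycle $C$ is an edge of the graph not in $E(C)$ with both ends on $C$; a chorded cycle is a cycle with at least one chord. A path is written as its vertex sequence; ''longest'' means having the maximum number of vertices. $H-V(P_1)$ is the subgraph induced by $V(H)\setminus V(P_1)$. For a subgraph $K$ and a vertex $u$, $d_K(u)=|N(u)\cap V(K)|$ is the number of neighbours of $u$ lying in $V(K)$ (in particular $d_H(u)$ is the degree of $u$ in $H$). *)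

(* Defs.v *)
From mathcomp Require Import all_boot.
Set Implicit Arguments. Unset Strict Implicit. Unset Printing Implicit Defensive.

Section Graph.
Variables (T : finType) (e : rel T).

Definition simple_graph : Prop := symmetric e /\ irreflexive e.

Definition connected_graph : Prop := forall x y : T, connect e x y.

Definition is_gpath (s : seq T) : bool :=
  if s is x :: s' then path e x s' && uniq s else false.

Definition is_gcycle (c : seq T) : bool :=
  [&& 3 <= size c, uniq c & cycle e c].

Definition is_chord (c : seq T) (x y : T) : bool :=
  [&& x \in c, y \in c, e x y, y != next c x & y != prev c x].

Definition chorded_cycle (c : seq T) : Prop :=
  is_gcycle c /\ exists x y, is_chord c x y.

Definition hamiltonian_path (s : seq T) : Prop :=
  is_gpath s /\ forall v : T, v \in s.

Definition deg (u : T) : nat := #|[set x | e u x]|.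
Definition deg_in (s : seq T) (u : T) : nat := #|[set x | (x \in s) && e u x]|.

(* longest path of H - V(A) (A = [::] gives H itself), counted in vertices *)
Definition avoids (A s : seq T) : bool := all (fun v => v \notin A) s.
Definition longest_path_avoiding (A s : seq T) : Prop :=
  is_gpath s /\ avoids A s /\
  forall s', is_gpath s' -> avoids A s' -> size s' <= size s.

Definition cut_vertex (w : T) : Prop :=
  exists x y : T, [/\ x != w, y != w &
    ~~ connect [rel a b | [&& e a b, a != w & b != w]] x y].

End Graph.

(* Main.v *)
Require Import Defs.
From mathcomp Require Import all_boot.
From mathcomp Require Import zify.
Set Implicit Arguments. Unset Strict Implicit. Unset Printing Implicit Defensive.

Section Gen.
Variables (T : finType) (e : rel T).
Hypothesis esym : symmetric e.
Hypothesis eirr : irreflexive e.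

Lemma cut_edge (r : rel T) (S : pred T) x y :
  connect r x y -> S x -> ~~ S y -> exists a b, [/\ S a, ~~ S b & r a b].
Proof.
move=> /connectP [p pth ->]; elim: p x pth => [|z p IH] x /=.
  by move=> _ ->.
case/andP=> rxz pth Sx nSl.
case Sz: (S z); first exact: IH pth Sz nSl.
by exists x, z; rewrite Sz.
Qed.

Lemma split_last (p : pred T) s : has p s ->
  exists s1 u s2, [/\ s = s1 ++ u :: s2, p u & ~~ has p s2].
Proof.
elim: s => [|x s IH] //= /orP [px|hs].
  case hs: (has p s).
    by case: (IH hs) => s1 [u] [s2] [-> pu nh]; exists (x :: s1), u, s2.
  by exists [::], x, s; rewrite hs.
by case: (IH hs) => s1 [u] [s2] [-> pu nh]; exists (x :: s1), u, s2.
Qed.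

Lemma path_revE z y b :
  path e z (rev (y :: b)) = e z (last y b) && path e y b.
Proof.
rewrite [y :: b]lastI rev_rcons /= rev_path.
by rewrite (@eq_path _ _ e) // => a c; rewrite esym.
Qed.

Lemma path_rev1 y b : path e y b -> path e (last y b) (rev (belast y b)).
Proof.
by move=> h; rewrite rev_path (eq_path (e' := e)) // => a c; rewrite esym.
Qed.

Lemma uniq_sub (Q B : seq T) :
  (forall x, count_mem x Q <= count_mem x B) -> uniq B -> uniq Q.
Proof.
move=> hc uB; apply: count_mem_uniq => x.
have h2 := hc x; rewrite (count_uniq_mem _ uB) in h2.
have h3 : count_mem x Q <= 1 by apply: leq_trans h2 _; case: (x \in B).
case xQ: (x \in Q).
  have : 0 < count_mem x Q by rewrite -has_count; apply/hasP; exists x => //=.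
  move=> h1; lia.
apply/eqP; rewrite /= -leqn0 leqNgt -has_count; apply/negP => /hasP [y yQ /= /eqP ey].
by move: xQ; rewrite -ey yQ.
Qed.


Hypothesis Hconn : connected_graph e.
Hypothesis Hnc : forall c : seq T, ~ chorded_cycle e c.

Lemma prev_at_last (x y : T) p : x \notin p -> prev_at x x y p = last y p.
Proof.
elim: p y => [|z p IH] y /=; first by rewrite eqxx.
by rewrite inE negb_or => /andP [/negbTE -> /IH].
Qed.

Lemma three_nbrs w Q' a b c : is_gpath e (w :: Q') ->
  a \in Q' -> b \in Q' -> c \in Q' -> a != b -> b != c -> c != a ->
  e w a -> e w b -> e w c -> False.
Proof.
move=> /= /andP [pQ uQ] aQ bQ cQ ab bc ca wa wb wc.
have hQ : has (e w) Q' by apply/hasP; exists a.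
case: (split_last hQ) => s1 [u] [s2] [dQ wu ns2].
have inpre z : z \in Q' -> e w z -> z \in rcons s1 u.
  move=> zQ wz; move: zQ; rewrite dQ mem_cat inE mem_rcons inE => /or3P [->|->|zs2].
  - by rewrite orbT.
  - by [].
  by move/hasP: ns2; case; exists z.
have aP := inpre _ aQ wa; have bP := inpre _ bQ wb; have cP := inpre _ cQ wc.
clear inpre; case: s1 dQ aP bP cP => [|q1 s1] dQ aP bP cP.
  move: aP bP; rewrite /= !inE => /eqP ea /eqP eb; by rewrite ea eb eqxx in ab.
have [y [yin wy yq yu]] : exists y, [/\ y \in rcons (q1 :: s1) u, e w y, y != q1 & y != u].
{ case: (eqVneq a q1) => [aq|aq]; case: (eqVneq a u) => [au|au]; try by exists a.
  all: (case: (eqVneq b q1) => [bq|bq]; case: (eqVneq b u) => [bu|bu]; try by exists b).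
  all: exists c; split => //; apply/negP => /eqP h; move: ab bc ca.
  all: by move=> /eqP ? /eqP ? /eqP ?; congruence. }
have uQ' : uniq (w :: rcons (q1 :: s1) u).
  have : uniq (w :: Q') := uQ.
  by rewrite dQ -cat_rcons -cat_cons cat_uniq => /andP [].
have wn : w \notin rcons (q1 :: s1) u by move: uQ' => /= /andP [].
apply: (Hnc (c := w :: rcons (q1 :: s1) u)); split.
  rewrite /is_gcycle uQ' /= size_rcons.
  rewrite rcons_path; apply/and3P; split => //.
  - by move: pQ; rewrite dQ /= => /andP [].
  - move: pQ; rewrite dQ /= => /andP [_]; rewrite cat_path => /andP [p1 /= /andP [p2 _]].
    by rewrite rcons_path p1 p2 last_rcons esym.
exists w, y; rewrite /is_chord in_cons eqxx /= in_cons yin orbT wy /= eqxx yq /=.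
have wq1 : (w == q1) = false by apply/negbTE; move: wn; rewrite /= inE negb_or => /andP [].
rewrite wq1 prev_at_last ?last_rcons //.
by move: wn; rewrite /= inE negb_or => /andP [].
Qed.


Definition Rw (w : T) := [rel a b | [&& e a b, a != w & b != w]].

Lemma Rw_sym w : symmetric (Rw w).
Proof. by move=> a b /=; rewrite esym andbCA andbA [(b != w) && _]andbC -andbA andbCA. Qed.

Lemma path_Rw w x l : path e x l -> all (fun z => z != w) (x :: l) -> path (Rw w) x l.
Proof.
elim: l x => [|y l IH] x //= /andP [exy pl] /and3P [xw yw al].
by rewrite exy xw yw /= IH //= yw.
Qed.

Lemma good_of_path w Q' : is_gpath e (w :: Q') -> Q' != [::] ->
  (forall x, e w x -> x \in Q') -> deg e w <= 2 /\ ~ cut_vertex e w.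
Proof.
move=> gQ nQ hN; split.
  rewrite leqNgt; apply/negP => /card_gt2P [a [b [c [[ha hb hc] [ab bc ca]]]]].
  rewrite !inE in ha hb hc.
  exact: (three_nbrs gQ (hN _ ha) (hN _ hb) (hN _ hc) ab bc ca ha hb hc).
case: Q' nQ gQ hN => [|q1 Q''] // _ gQ hN.
move: (gQ) => /= /andP [/andP [wq1 pQ] /andP [wn uQ]].
have csym := sym_connect_sym (Rw_sym w).
have inQ z : z \in q1 :: Q'' -> connect (Rw w) q1 z.
  rewrite inE => /orP [/eqP ->|zQ]; first exact: connect0.
  case/splitPr: zQ pQ wn => p1 p2.
  rewrite cat_path => /andP [p1p /= /andP [lz _]] wn.
  apply/connectP; exists (rcons p1 z); last by rewrite last_rcons.
  apply: path_Rw; first by rewrite rcons_path p1p lz.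
  apply/allP => t tin; apply/negP => /eqP tw; move: wn; rewrite -tw; apply/negPn.
  move: tin; rewrite !(inE, mem_rcons, mem_cat).
  by case/orP => [->|/orP [->|->]]; rewrite ?orbT.
have toq x : x != w -> connect (Rw w) x q1.
  move=> xw.
  have Sx : (fun z => (z != w) && connect (Rw w) x z) x by rewrite /= xw connect0.
  have nSw : ~~ (fun z => (z != w) && connect (Rw w) x z) w by rewrite /= eqxx.
  have [a [b [Sa nSb eab]]] := @cut_edge e (fun z => (z != w) && connect (Rw w) x z) x w (Hconn x w) Sx nSw.
  move/andP: Sa => [aw cxa].
  case: (eqVneq b w) => [bw|bw].
    have : a \in q1 :: Q'' by apply: hN; rewrite esym -bw.
    by move/inQ; rewrite csym => cq; apply: connect_trans cxa cq.
  move: nSb; rewrite /= bw /=; apply: contraNT => _.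
  by apply: connect_trans cxa (connect1 _); rewrite /= eab aw bw.
move=> [x [y [xw yw nc]]].
by move: nc; rewrite (connect_trans (toq x xw)) // csym toq.
Qed.


Definition cutconn (K : {set T}) := forall S : pred T,
  (exists x, x \in K /\ S x) -> (exists y, y \in K /\ ~~ S y) ->
  exists a b, [/\ a \in K, b \in K, S a, ~~ S b & e a b].

Definition restr (K : {set T}) := [rel a b | [&& e a b, a \in K & b \in K]].
Definition comp (K : {set T}) a := [set z | connect (restr K) a z].

Lemma restr_sym (K : {set T}) : symmetric (restr K).
Proof. by move=> a b /=; rewrite esym andbCA andbA [(b \in K) && _]andbC -andbA andbCA. Qed.

Lemma path_restr_last (K : {set T}) x p : path (restr K) x p -> x \in K -> last x p \in K.
Proof. by elim: p x => [|y p IH] x //= /andP [/and3P [_ _ yK] pp] _; apply: IH. Qed.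

Lemma comp_sub (K : {set T}) a x : a \in K -> x \in comp K a -> x \in K.
Proof. by move=> aK; rewrite inE => /connectP [p pp ->]; apply: path_restr_last. Qed.

Lemma comp_closed (K : {set T}) a x y : a \in K -> x \in comp K a -> y \in K -> e x y -> y \in comp K a.
Proof.
move=> aK xC yK exy; move: (xC); rewrite !inE => cx.
by apply: connect_trans cx (connect1 _); rewrite /= exy yK (comp_sub aK xC).
Qed.

Lemma comp_self (K : {set T}) a : a \in comp K a.
Proof. by rewrite inE connect0. Qed.

Lemma comp_cutconn (K : {set T}) a : a \in K -> cutconn (comp K a).
Proof.
move=> aK S [x [xC Sx]] [y [yC nSy]].
have csym := sym_connect_sym (restr_sym K).
have cxy : connect (restr K) x y.
  by move: xC yC; rewrite !inE => cx cy; apply: connect_trans cy; rewrite csym.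
have S'x : (fun z => S z && (z \in comp K a)) x by rewrite /= Sx xC.
have nS'y : ~~ (fun z => S z && (z \in comp K a)) y by rewrite /= (negbTE nSy).
have [a' [b' [/andP [Sa' a'C] nSb' /and3P [eab a'K b'K]]]] :=
  @cut_edge (restr K) (fun z => S z && (z \in comp K a)) x y cxy S'x nS'y.
have b'C := comp_closed aK a'C b'K eab.
by exists a', b'; split => //; move: nSb'; rewrite /= b'C andbT.
Qed.

Definition leafpath (K : {set T}) r v (w : T) (W : seq T) :=
  [/\ is_gpath e (w :: W), {subset w :: W <= K}, last w W = r, w != v &
      forall x, x \in K -> e w x -> x \in w :: W].
Definition hampath (K : {set T}) r v (X : seq T) :=
  [/\ is_gpath e (r :: X), (forall x, (x \in K) = (x \in r :: X)) & last r X = v].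

Lemma leaf_ext (K : {set T}) r v b w W : b \in K :\ r -> e b r ->
  leafpath (comp (K :\ r) b) b v w W -> r \in K -> leafpath K r v w (rcons W r).
Proof.
move=> bK' ebr [gp sub lw wv nb] rK.
have subK' : {subset w :: W <= K :\ r} by move=> x /sub; apply: comp_sub.
have rn : r \notin w :: W by apply/negP => /subK'; rewrite !inE eqxx.
split.
- move: gp => /= /andP [pW uW]; rewrite /is_gpath; apply/andP; split.
    by rewrite rcons_path pW lw ebr.
  by change (uniq (w :: rcons W r)); rewrite -rcons_cons rcons_uniq rn.
- move=> x; rewrite -rcons_cons mem_rcons inE => /orP [/eqP -> //|/subK'].
  by rewrite inE => /andP [].
- by rewrite last_rcons.
- exact: wv.
move=> x xK ewx; rewrite -rcons_cons mem_rcons inE.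
case: (eqVneq x r) => [-> //|xr] /=.
apply: nb => //; apply: comp_closed bK' _ _ ewx; first exact: sub (mem_head _ _).
by rewrite !inE xr.
Qed.

Lemma claimL n : forall (K : {set T}) r v, #|K| <= n -> r \in K -> cutconn K ->
  (exists w W, leafpath K r v w W) \/ (exists X, hampath K r v X).
Proof.
elim: n => [|n IH] K r v hK rK cK.
  by move: hK; rewrite leqn0 => /eqP /cards0_eq K0; rewrite K0 inE in rK.
case: (boolP [exists a, (a \in K) && (a != r)]) => [/existsP [a' /andP [a'K a'r]]|hno].
  have [a0 [b0 [a0K b0K /eqP a0r b0r erb]]] :
    exists a b, [/\ a \in K, b \in K, pred1 r a, ~~ pred1 r b & e a b].
    by apply: cK; [exists r; rewrite /= eqxx | exists a'].
  subst a0.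
  set K' := K :\ r.
  have b0K' : b0 \in K' by rewrite !inE b0r.
  have cardK' : #|K'| <= n.
    by move: hK; rewrite /K' (cardsD1 r K) rK add1n ltnS.
  have cardC b : b \in K' -> #|comp K' b| <= n.
    move=> bK'; apply: leq_trans cardK'; apply: subset_leq_card.
    by apply/subsetP => x; apply: comp_sub.
  case: (IH (comp K' b0) b0 v (cardC _ b0K') (comp_self _ _) (comp_cutconn b0K'))
    => [[w [W lp]]|[X [gX cX lX]]].
    by left; exists w, (rcons W r); apply: leaf_ext lp rK => //; rewrite esym.
  have XK' x : x \in b0 :: X -> x \in K' by rewrite -cX; apply: comp_sub b0K'.
  case: (boolP [exists t, (t \in K') && (t \notin comp K' b0)]) =>
    [/existsP [t /andP [tK' tnC]]|hno'].
    have tK : t \in K by move: tK'; rewrite !inE => /andP [].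
    have rnt : r \notin comp K' t by apply/negP => /(comp_sub tK'); rewrite !inE eqxx.
    have [a1 [b1 [a1K b1K a1C b1C eab]]] :
      exists a b, [/\ a \in K, b \in K, a \in comp K' t, b \notin comp K' t & e a b].
      by apply: (cK (mem (comp K' t))); [exists t; rewrite /= comp_self | exists r].
    have a1K' : a1 \in K' := comp_sub tK' a1C.
    have b1r : b1 = r.
      apply/eqP; apply: contraNT b1C => b1r; apply: comp_closed tK' a1C _ eab.
      by rewrite !inE b1r.
    subst b1.
    case: (IH (comp K' a1) a1 v (cardC _ a1K') (comp_self _ _) (comp_cutconn a1K'))
      => [[w [W lp]]|[X2 [gX2 cX2 lX2]]].
      by left; exists w, (rcons W r); apply: leaf_ext lp rK.
    exfalso; move: tnC; apply/negP/negPn.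
    have csym := sym_connect_sym (restr_sym K').
    have vC : v \in comp K' b0 by rewrite cX -lX mem_last.
    have vD : v \in comp K' a1 by rewrite cX2 -lX2 mem_last.
    move: vC vD a1C; rewrite !inE => c1 c2 c3.
    apply: connect_trans (connect_trans c1 _) _; first by rewrite csym; exact: c2.
    by rewrite csym.
  right; exists (b0 :: X); split.
  - move: gX => /= /andP [pX uX]; rewrite erb pX uX andbT /=.
    by rewrite andbT; apply/negP => /XK'; rewrite !inE eqxx.
  - move=> x; rewrite [RHS]inE -cX; case: (eqVneq x r) => [->|xr] /=; first by rewrite rK.
    apply/idP/idP => [xK|]; last by move/(comp_sub b0K'); rewrite !inE => /andP [].
    have xK' : x \in K' by rewrite !inE xr.
    by apply/negPn/negP => xnC; move/existsP: hno'; apply; exists x; rewrite xK' xnC.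
  - by [].
case: (eqVneq r v) => [rv|rv].
  right; exists [::]; split => //=.
  move=> x; rewrite inE; apply/idP/idP => [xK|/eqP -> //].
  by apply/negPn/negP => xr; move/existsP: hno; apply; exists x; rewrite xK xr.
left; exists r, [::]; split => //=.
- by move=> x; rewrite inE => /eqP ->.
- move=> x xK _; rewrite inE; apply/negPn/negP => xr.
  by move/existsP: hno; apply; exists x; rewrite xK xr.
Qed.


Lemma gp_suf A B : is_gpath e (A ++ B) -> B != [::] -> is_gpath e B.
Proof.
case: B => [|y B] g // _; move: g; case: A => [|a A] //= /andP [pp uu].
move: pp; rewrite cat_path => /andP [_] /= /andP [_ pB].
rewrite pB /=.
by move: uu => /andP [_]; rewrite cat_uniq => /and3P [_ _].
Qed.

Lemma gp_pre A B : is_gpath e (A ++ B) -> A != [::] -> is_gpath e A.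
Proof.
case: A => [|a A] g // _; move: g => /= /andP [pp uu].
move: pp; rewrite cat_path => /andP [-> _] /=.
have u2 : uniq ((a :: A) ++ B) by exact: uu.
by move: u2; rewrite cat_uniq => /and3P [].
Qed.

Lemma gp_prev A y B : is_gpath e (A ++ y :: B) -> path e y (rev A).
Proof.
elim/last_ind: A y B => [|A a IH] y B //.
rewrite cat_rcons => g; rewrite rev_rcons /=.
have := gp_suf g isT => /= /andP [/andP [ay _] _].
by rewrite esym ay; apply: IH g.
Qed.

Lemma gp_edge A a y B : is_gpath e (A ++ a :: y :: B) -> e a y.
Proof. by move=> g; have := gp_suf g isT => /= /andP [/andP []]. Qed.

Definition good w := deg e w <= 2 /\ ~ cut_vertex e w.

Lemma good_path w Q' : is_gpath e (w :: Q') -> Q' != [::] ->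
  (forall x, e w x -> x \in Q') -> good w.
Proof. exact: good_of_path. Qed.


Lemma gp_uniq l : is_gpath e l -> uniq l.
Proof. by case: l => //= x l /andP [_ ->]. Qed.

Lemma gp_cat x a y b : is_gpath e (x :: a) -> is_gpath e (y :: b) ->
  e (last x a) y -> (forall z, z \in y :: b -> z \notin x :: a) ->
  is_gpath e (x :: a ++ y :: b).
Proof.
move=> g1 g2 lxy dis; rewrite /is_gpath cat_path.
move: g1 g2 => /andP [p1 u1] /andP [p2 u2]; rewrite p1 /= lxy p2 /=.
change (uniq ((x :: a) ++ y :: b)).
rewrite cat_uniq u1 u2 andbT andTb; apply/hasPn => z /dis.
by [].
Qed.

Lemma last_rev_head (y : T) A : last y (rev A) = head y A.
Proof. by case: A => //= a A; rewrite rev_cons last_rcons. Qed.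


Ltac gen_lia :=
  repeat match goal with
  | |- context [nat_of_bool ?b] => let n := fresh "n" in set n := nat_of_bool b; clearbody n
  | |- context [count ?p ?l] => let n := fresh "n" in set n := count p l; clearbody n
  end;
  repeat match goal with H : _ |- _ => clear H end; lia.

Lemma attach (s : seq T) (K : {set T}) v :
  is_gpath e s -> cutconn K -> (forall x, x \in K -> x \notin s) ->
  (forall x y, x \in K -> e x y -> (y \in K) || (y \in s)) ->
  (exists x0, x0 \in K) ->
  (v \notin K \/ (2 < #|K| /\ exists n1 n2, [/\ n1 != n2, e v n1 & e v n2])) ->
  exists w, [/\ w \in K, w != v & good w].
Proof.
move=> gs cK Ks clK [x0 x0K] hv.
have us := gp_uniq gs.
have sdisj x : x \in s -> x \notin K by apply: contraTN => /Ks.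
pose p := fun y => [exists x, (x \in K) && e x y].
have hp : has p s.
  case: s gs Ks clK sdisj us => [|u s'] // gs Ks clK sdisj us.
  have nSu : ~~ (fun z => z \in K) u by apply: sdisj; rewrite mem_head.
  have [a [b [aK bK eab]]] := @cut_edge e (fun z => z \in K) x0 u (Hconn x0 u) x0K nSu.
  apply/hasP; exists b; first by move: (clK _ _ aK eab); rewrite (negbTE bK).
  by apply/existsP; exists a; rewrite aK eab.
case: (split_last hp) => s1 [ust] [s2] [ds /existsP [k0 /andP [k0K ek0]] ns2].
have Tlg : is_gpath e (ust :: rev s1).
  rewrite /is_gpath (gp_prev (B := s2)) -?ds //=.
  have : uniq (rcons s1 ust) by move: us; rewrite ds -cat_rcons cat_uniq => /and3P [].
  by rewrite -rev_uniq rev_rcons.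
have Qleaf w W : leafpath K k0 v w W -> good w.
  move=> [gW subW lW wv nbW].
  apply: (@good_path w (W ++ ust :: rev s1)).
  - apply: gp_cat => //; first by rewrite lW.
    move=> z zT; apply/negP => /subW zK.
    have : z \in s by move: zT; rewrite ds inE mem_rev mem_cat inE => /orP [->|->]; rewrite ?orbT.
    by move/sdisj; rewrite zK.
  - by case: W {gW subW lW nbW}.
  move=> x ewx.
  have wK : w \in K by apply: subW; rewrite mem_head.
  case/orP: (clK _ _ wK ewx) => [xK|xs].
    have := nbW _ xK ewx; rewrite inE => /orP [/eqP xw|xW]; last by rewrite mem_cat xW.
    by move: ewx; rewrite xw eirr.
  have px : p x by apply/existsP; exists w; rewrite wK ewx.
  move: xs; rewrite ds mem_cat inE => /or3P [xs1|/eqP ->|xs2].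
  - by rewrite mem_cat inE mem_rev xs1 !orbT.
  - by rewrite mem_cat mem_head orbT.
  by move/hasP: ns2; case; exists x.
have [[w [W lp]]|[X [gX cX lX]]] := @claimL #|K| K k0 v (leqnn _) k0K cK.
  by exists w; case: (lp) => _ sub _ wv _; split => //; [apply: sub; rewrite mem_head | apply: Qleaf lp].
have vK : v \in K by rewrite cX -lX mem_last.
case: hv => [vnK|[cardK [n1 [n2 [n12 vn1 vn2]]]]]; first by rewrite vK in vnK.
have uH := gp_uniq gX.
have cardH : #|K| = size (k0 :: X).
  by rewrite -(card_uniqP uH); apply: eq_card => x; rewrite cX.
have HK x : x \in k0 :: X -> x \in K by rewrite cX.
have case_a y A b B' : y \in K -> e v y -> k0 :: X = A ++ y :: b :: B' -> B' != [::] ->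
    exists w, [/\ w \in K, w != v & good w].
  move=> yK evy dH nB'.
  have lB : last b B' = v by rewrite -lX -(last_cons k0 k0 X) dH last_cat.
  have uH' : uniq (rcons A y ++ b :: B') by rewrite cat_rcons -dH.
  have gsuf : is_gpath e (b :: B') by apply: (gp_suf (A := rcons A y)) => //; rewrite cat_rcons -dH.
  have gpre : is_gpath e (y :: rev A).
    rewrite /is_gpath (gp_prev (B := b :: B')) -?dH //=.
    by move: uH'; rewrite cat_uniq -rev_uniq rev_rcons => /and3P [].
  have hd : head y A = k0 by case: A dH {uH' gpre} => [|a A] /= [->].
  have memZ z : (z \in b :: B' ++ y :: rev A) = (z \in k0 :: X).
    rewrite dH !(mem_cat, inE, mem_rev).
    by case: (z == b); case: (z == y); case: (z \in A); case: (z \in B').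
  have bv : b != v.
    have bn : b \notin B' by move: (gp_uniq gsuf) => /= /andP [].
    case: B' nB' lB bn {uH' memZ dH gsuf} => [|c C] // _ /= lB bn.
    by apply: contraNneq bn => ->; rewrite -lB mem_last.
  exists b; split => //; first by apply: HK; rewrite -memZ mem_head.
  apply: (@Qleaf b (B' ++ y :: rev A)); split => //.
  - apply: gp_cat => //; first by rewrite lB.
    move=> z zy; apply/negP => zb.
    move: uH'; rewrite cat_uniq => /and3P [_ /hasPn /(_ z zb)].
    by rewrite mem_rcons; move: zy; rewrite !inE mem_rev => ->.
  - by move=> z; rewrite memZ; apply: HK.
  - by rewrite last_cat lB /= last_rev_head hd.
  by move=> x xK _; rewrite memZ -cX.
have [Y dY] : exists Y, k0 :: X = rcons Y v by exists (belast k0 X); rewrite -lX -lastI.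
have notpv y : y \in K -> e v y -> y != last k0 Y -> exists w, [/\ w \in K, w != v & good w].
  move=> yK evy ypv.
  have yv : y != v by apply: contraTneq evy => ->; rewrite eirr.
  have yY : y \in Y by move: (yK); rewrite cX dY mem_rcons inE (negbTE yv).
  case/splitPr: yY dY ypv => A B dY ypv.
  case: B dY ypv => [|b B''] dY ypv; first by rewrite last_cat /= eqxx in ypv.
  apply: (case_a y A b (rcons B'' v)) => //; last by case: B'' {dY ypv}.
  by rewrite dY rcons_cat.
case: (boolP ((n1 \in K) && (n1 != last k0 Y))) => [/andP [n1K n1p]|h1]; first exact: notpv n1K vn1 n1p.
case: (boolP ((n2 \in K) && (n2 != last k0 Y))) => [/andP [n2K n2p]|h2]; first exact: notpv n2K vn2 n2p.
have [ub [ubs evub]] : exists ub, ub \in s /\ e v ub.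
  case n1K: (n1 \in K); last first.
    by exists n1; split => //; move: (clK _ _ vK vn1); rewrite n1K.
  case n2K: (n2 \in K); last first.
    by exists n2; split => //; move: (clK _ _ vK vn2); rewrite n2K.
  move: h1 h2; rewrite n1K n2K /= !negbK => /eqP e1 /eqP e2.
  by rewrite e1 e2 eqxx in n12.
have Xn : X != [::] by case: X cardH {gX cX lX uH HK case_a dY notpv} => // cH; rewrite cH in cardK.
have k0v : k0 != v.
  apply: contraNneq (_ : k0 \notin X); first by move=> ->; rewrite -lX; case: X Xn {gX cX lX uH HK case_a dY notpv cardH} => //= x X _; rewrite mem_last.
  by move: uH => /= /andP [].
have [S1 [S3 dS]] : exists S1 S3, s = S1 ++ ub :: S3 by case/splitPr: ubs => S1 S3; exists S1, S3.
have gkX : is_gpath e (k0 :: X) := gX.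
have k0good Z : is_gpath e (k0 :: X ++ Z) -> Z != [::] ->
    (forall y, y \in S1 ++ ub :: S3 -> e k0 y -> y \in Z) ->
    exists w, [/\ w \in K, w != v & good w].
  move=> gZ nZ hZ; exists k0; split => //.
  apply: (good_path gZ); first by case: (X) Xn.
  move=> x ex; case/orP: (clK _ _ k0K ex) => [xK|xs]; last by rewrite mem_cat (hZ x) ?orbT // -dS.
  move: xK; rewrite cX inE => /orP [/eqP xk|xX]; last by rewrite mem_cat xX.
  by move: ex; rewrite xk eirr.
have dis z : z \in S1 ++ ub :: S3 -> z \notin k0 :: X.
  by rewrite -dS => /sdisj; apply: contra => /HK.
have gs' : is_gpath e (S1 ++ ub :: S3) by rewrite -dS.
have us' : uniq (S1 ++ ub :: S3) by rewrite -dS.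
have gS3 : is_gpath e (ub :: S3) by apply: (gp_suf (A := S1)).
have gS1 : is_gpath e (ub :: rev S1).
  rewrite /is_gpath (gp_prev gs') /=.
  have : uniq (rcons S1 ub) by move: us'; rewrite -cat_rcons cat_uniq => /and3P [].
  by rewrite -rev_uniq rev_rcons.
case: (boolP (has (e k0) S1)) => h1'; last first.
  apply: (k0good (ub :: S3)) => //.
    apply: gp_cat => //; first by rewrite lX.
    by move=> z zs; apply: dis; rewrite mem_cat zs orbT.
  move=> y; rewrite mem_cat => /orP [yS1 ey|//].
  by move/hasP: h1'; case; exists y.
case: (boolP (has (e k0) S3)) => h3'; last first.
  apply: (k0good (ub :: rev S1)) => //.
    apply: gp_cat => //; first by rewrite lX.
    move=> z; rewrite in_cons mem_rev => zs; apply: dis.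
    by rewrite mem_cat in_cons; move: zs => /orP [->|->]; rewrite ?orbT.
  move=> y; rewrite mem_cat in_cons in_cons mem_rev => /or3P [->|->|yS3 ey] //; first by rewrite orbT.
  by move/hasP: h3'; case; exists y.
case/hasP: h1' => uc ucS1 ek0c.
case/hasP: h3' => ud udS3 ek0d.
case/splitPr: ucS1 gs' us' dis dS => S1a S1b gs' us' dis dS.
case/splitPr: udS3 gs' us' dis dS => S3a S3b gs' us' dis dS.
have [x2 [x3 [X3 dX]]] : exists x2 x3 X3, X = x2 :: x3 :: X3.
  by move: cardK; rewrite cardH; case: (X) => [|x2 [|x3 X3]] //= _; exists x2, x3, X3.
subst X.
move: (gX) => /andP [/= /and3P [ek0x2 ex2x3 px3] _].
have lv : last x3 X3 = v by rewrite -lX.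
have x2K : x2 \in K by apply: HK; rewrite !inE eqxx orbT.
have x3K : x3 \in K by apply: HK; rewrite !inE eqxx !orbT.
have x2v : x2 != v.
  move: uH => /= /and3P [_ h _].
  by apply: contraNneq h => ->; rewrite -lv mem_last.
have k0x3 : k0 != x3 by move: uH => /= /andP [+ _]; rewrite !in_cons !negb_or => /and3P [_ /eqP h _]; apply/eqP.
have pS3 : path e ub (S3a ++ ud :: S3b).
  have g := @gp_suf (S1a ++ uc :: S1b) (ub :: S3a ++ ud :: S3b) gs' isT.
  by move: g => /= /andP [].
move: pS3; rewrite cat_path => /andP [pS3a]; rewrite /= => /andP [eS3ud pS3b].
have pS1a : path e uc (rev S1a).
  by apply: (@gp_prev S1a uc (S1b ++ ub :: S3a ++ ud :: S3b)); move: gs'; rewrite -catA.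
have pS1b : path e ub (rev (uc :: S1b)).
  apply: (@gp_prev (uc :: S1b) ub (S3a ++ ud :: S3b)).
  by apply: (@gp_suf S1a) => //; move: gs'; rewrite -catA.
move: pS1b; rewrite rev_cons rcons_path => /andP [pS1b eS1uc].
have edk : e ud k0 by rewrite esym.
have eck : e uc k0 by rewrite esym.
have uB : uniq ((k0 :: x2 :: x3 :: X3) ++ s).
  rewrite cat_uniq uH us andbT /=; apply/hasPn => z zs; apply/negP => /HK zK.
  by move/sdisj: zs; rewrite zK.
have g3 : is_gpath e (x2 :: x3 :: X3 ++ ub :: S3a ++ ud :: k0 :: uc :: rev S1a).
  rewrite /is_gpath; apply/andP; split.
    by rewrite /= ex2x3 cat_path px3 lv /= evub cat_path pS3a /= eS3ud edk ek0c pS1a.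
  apply: (uniq_sub (B := (k0 :: x2 :: x3 :: X3) ++ s)) => // x.
  rewrite dS /=; do 3 rewrite ?(count_cat, count_rev) /=.
  gen_lia.
have g4 : is_gpath e (x2 :: x3 :: X3 ++ ub :: rev S1b ++ uc :: k0 :: ud :: S3b).
  rewrite /is_gpath; apply/andP; split.
    by rewrite /= ex2x3 cat_path px3 lv /= evub cat_path pS1b /= eS1uc eck ek0d pS3b.
  apply: (uniq_sub (B := (k0 :: x2 :: x3 :: X3) ++ s)) => // x.
  rewrite dS /=; do 3 rewrite ?(count_cat, count_rev) /=.
  gen_lia.
exists x2; split => //; apply: (good_path g4) => // y ey.
case/orP: (clK _ _ x2K ey) => [yK|ys].
  move: yK; rewrite cX !in_cons => /or3P [/eqP ->|/eqP yx2|yX].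
  - by rewrite !(mem_cat, in_cons) eqxx !orbT.
  - by move: ey; rewrite yx2 eirr.
  by case/orP: yX => [/eqP ->|yX]; rewrite ?eqxx // mem_cat yX !orbT.
exfalso.
have yk0 : y != k0 by apply: contraTneq ys => ->; apply: Ks.
have x3y : x3 != y by apply: contraTneq ys => <-; apply: Ks.
have ex2k0 : e x2 k0 by rewrite esym.
have : (y \in x3 :: X3 ++ ub :: S3a ++ ud :: k0 :: uc :: rev S1a) ||
       (y \in x3 :: X3 ++ ub :: rev S1b ++ uc :: k0 :: ud :: S3b).
  move: ys; rewrite dS !(mem_cat, in_cons, mem_rev) => h.
  by repeat case/orP: h => h; rewrite ?h ?orbT.
case/orP => yQ.
  apply: (three_nbrs g3 _ _ yQ k0x3 x3y yk0 ex2k0 ex2x3 ey).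
    by rewrite !(mem_cat, in_cons) eqxx !orbT.
  by rewrite mem_head.
apply: (three_nbrs g4 _ _ yQ k0x3 x3y yk0 ex2k0 ex2x3 ey).
  by rewrite !(mem_cat, in_cons) eqxx !orbT.
by rewrite mem_head.
Qed.


Lemma card_le2 (K : {set T}) a b c : #|K| <= 2 -> a \in K -> b \in K -> c \in K ->
  a != b -> (c == a) || (c == b).
Proof.
move=> hK aK bK cK ab; apply/negPn/negP; rewrite negb_or => /andP [ca cb].
move: hK; rewrite leqNgt => /negP; apply; apply/card_gt2P.
by exists a, b, c; split; split => //; rewrite eq_sym.
Qed.

Lemma card_out (K : {set T}) a b : 2 < #|K| -> exists c, [/\ c \in K, c != a & c != b].
Proof.
move=> hK; have h1 := cardsD1 a K; have h2 := cardsD1 b (K :\ a).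
have : 0 < #|K :\ a :\ b|.
  by move: h1 h2 hK; case: (a \in K); case: (b \in K :\ a) => /=; lia.
by case/card_gt0P => c; rewrite !inE => /and3P [cb ca cK]; exists c.
Qed.

Lemma main_in u1 P1' v1 P2' :
  (forall s : seq T, ~ hamiltonian_path e s) ->
  longest_path_avoiding e [::] (u1 :: P1') ->
  longest_path_avoiding e (u1 :: P1') (v1 :: P2') ->
  (size (v1 :: P2') <= 2 /\ (forall v : T, (v \in u1 :: P1') || (v \in v1 :: P2'))) \/
  (3 <= size (v1 :: P2') /\ deg e v1 = 1) \/
  (exists w : T, [/\ w \notin u1 :: P1', w != v1, deg e w <= 2,
        ~~ e u1 w /\ ~~ e (last u1 P1') w & ~ cut_vertex e w]).
Proof.
move=> _ [gs [_ long1]] [gP2 [av2 long2]].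
set s := u1 :: P1' in gs long1 av2 long2 *.
have us := gp_uniq gs.
have v1s : v1 \notin s by move: av2 => /andP [].
have nadj w : w \notin s -> ~~ e u1 w /\ ~~ e (last u1 P1') w.
  move=> ws; split; apply/negP => ew.
    have g : is_gpath e (w :: s).
      apply/andP; split; first by rewrite /s /= esym ew; case/andP: gs.
      by change ((w \notin s) && uniq s); rewrite ws us.
    have : size (w :: s) <= size s by apply: long1 g _; rewrite /avoids; apply/allP.
    by rewrite /= ltnn.
  have : size (rcons s w) <= size s.
    apply: long1; last by rewrite /avoids; apply/allP.
    rewrite /s rcons_cons /is_gpath rcons_path ew andbT.
    move: gs => /= /andP [-> _] /=.
    by change (uniq (rcons (u1 :: P1') w)); rewrite rcons_uniq ws us.
  by rewrite size_rcons ltnn.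
set R := [set x | x \notin s].
have v1R : v1 \in R by rewrite inE.
set K := comp R v1.
have compK a x : a \in R -> x \in comp R a -> x \notin s.
  by move=> aR xC; move: (comp_sub aR xC); rewrite inE.
have compcl a : a \in R -> forall x y, x \in comp R a -> e x y -> (y \in comp R a) || (y \in s).
  move=> aR x y xC exy; case ys: (y \in s); first by rewrite orbT.
  by rewrite (comp_closed aR xC _ exy) // inE ys.
have fin w : w \notin s -> w != v1 -> good w ->
    (size (v1 :: P2') <= 2 /\ (forall v : T, (v \in u1 :: P1') || (v \in v1 :: P2'))) \/
    (3 <= size (v1 :: P2') /\ deg e v1 = 1) \/
    (exists w : T, [/\ w \notin u1 :: P1', w != v1, deg e w <= 2,
        ~~ e u1 w /\ ~~ e (last u1 P1') w & ~ cut_vertex e w]).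
  by move=> ws wv [dw cw]; right; right; exists w; split => //; apply: nadj.
case: (boolP [exists t, (t \notin s) && (t \notin K)]) => [/existsP [t /andP [ts tK]]|hall].
  have tR : t \in R by rewrite inE.
  have [w [wK wv gw]] : exists w, [/\ w \in comp R t, w != v1 & good w].
    apply: (attach gs (comp_cutconn tR) (fun x => compK t x tR) (compcl t tR)).
      by exists t; apply: comp_self.
    left; apply/negP => v1C; move: tK; rewrite inE.
    have csym := sym_connect_sym (restr_sym R).
    by move: v1C; rewrite inE csym => ->.
  exact: fin (compK _ _ tR wK) wv gw.
have inK x : x \notin s -> x \in K.
  by move=> xs; apply/negPn/negP => xK; move/existsP: hall; apply; exists x; rewrite xs xK.
have P2K x : x \in v1 :: P2' -> x \in K.
  by move=> xP; apply: inK; move/allP: av2; apply.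
have cK := comp_cutconn v1R.
have v1K : v1 \in K := comp_self _ _.
case: (leqP #|K| 2) => hK.
  left; split.
    apply: leq_trans hK; rewrite -(card_uniqP (gp_uniq gP2)).
    by apply: subset_leq_card; apply/subsetP => x; apply: P2K.
  move=> v; case vs: (v \in s) => //=.
  have vK : v \in K by apply: inK; rewrite vs.
  case: (eqVneq v v1) => [->|vv1]; first by rewrite mem_head.
  have [a [b [aK bK /eqP av1 bv1 eab]]] :
      exists a b, [/\ a \in K, b \in K, pred1 v1 a, ~~ pred1 v1 b & e a b].
    by apply: cK; [exists v1; rewrite /= eqxx | exists v].
  subst a.
  have v1v : v1 != v by rewrite eq_sym.
  have bv : b = v.
    have bv1' : (b == v1) = false by apply/negbTE.
    by move: (card_le2 hK v1K vK bK v1v); rewrite bv1' /= => /eqP.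
  subst b.
  have : size [:: v1; v] <= size (v1 :: P2').
    apply: long2; first by rewrite /is_gpath /= eab andbT inE eq_sym vv1.
    by rewrite /avoids /= v1s vs.
  case: P2' gP2 av2 long2 P2K {fin} => [|p P] // gP2 av2 long2 P2K _.
  have pK : p \in K by apply: P2K; rewrite !inE eqxx orbT.
  have pv1 : p != v1 by move: (gp_uniq gP2) => /= /andP []; rewrite inE negb_or => /andP [+ _]; rewrite eq_sym.
  move: (card_le2 hK v1K vK pK v1v).
  rewrite (negbTE pv1) /= => /eqP ->.
  by rewrite !inE eqxx orbT.
right.
have [y [yK yv1 _]] := card_out v1 v1 hK.
have [a [b [aK bK /eqP av1 bv1 ev1b]]] :
    exists a b, [/\ a \in K, b \in K, pred1 v1 a, ~~ pred1 v1 b & e a b].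
  by apply: cK; [exists v1; rewrite /= eqxx | exists y; rewrite /= yv1].
subst a; move: bv1; rewrite /= => bv1.
have [y' [y'K y'v1 y'b]] := card_out v1 b hK.
have [a [c [aK' cK' aS cS eac]]] :
    exists a c, [/\ a \in K, c \in K, (a == v1) || (a == b), ~~ ((c == v1) || (c == b)) & e a c].
  apply: (cK (fun z => (z == v1) || (z == b))); first by exists v1; rewrite eqxx.
  by exists y'; rewrite (negbTE y'v1) (negbTE y'b).
move: cS; rewrite negb_or => /andP [cv1 cb].
have Ks x : x \in K -> x \notin s := compK v1 x v1R.
have v1b : v1 != b by rewrite eq_sym.
have v1c : v1 != c by rewrite eq_sym.
have bc : b != c by rewrite eq_sym.
have size3 : 3 <= size (v1 :: P2').
  case/orP: aS => /eqP ea; subst a.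
    have : size [:: b; v1; c] <= size (v1 :: P2'); last by [].
    apply: long2; last by rewrite /avoids /= !Ks.
    by rewrite /is_gpath /= esym ev1b eac !inE !negb_or ?bv1 ?v1b ?cv1 ?v1c ?cb ?bc.
  have : size [:: v1; b; c] <= size (v1 :: P2'); last by [].
  apply: long2; last by rewrite /avoids /= !Ks.
  by rewrite /is_gpath /= ev1b eac !inE !negb_or ?bv1 ?v1b ?cv1 ?v1c ?cb ?bc.
case: (eqVneq (deg e v1) 1) => [d1|d1]; first by left.
right.
have : 0 < deg e v1 by apply/card_gt0P; exists b; rewrite inE.
move=> d0; have : 1 < deg e v1 by move: d0 d1; case: (deg e v1) => [|[|n]].
case/card_gt1P => n1 [n2 [n1in n2in n12]]; rewrite !inE in n1in n2in.
have [w [wK wv gw]] : exists w, [/\ w \in K, w != v1 & good w].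
  apply: (attach gs cK (fun x => compK v1 x v1R) (compcl v1 v1R)); first by exists v1.
  by right; split => //; exists n1, n2.
have [dw cw] := gw.
by exists w; split => //; [apply: Ks | apply: nadj; apply: Ks].
Qed.

End Gen.

Theorem lemma2p4 (T : finType) (e : rel T) (u1 : T) (P1' : seq T)
    (v1 : T) (P2' : seq T) :
  simple_graph e ->
  connected_graph e ->
  4 <= #|T| ->
  (forall c : seq T, ~ chorded_cycle e c) ->
  (forall s : seq T, ~ hamiltonian_path e s) ->
  longest_path_avoiding e [::] (u1 :: P1') ->
  3 <= size (u1 :: P1') ->
  longest_path_avoiding e (u1 :: P1') (v1 :: P2') ->
  deg_in e (u1 :: P1') v1 <= deg_in e (u1 :: P1') (last v1 P2') ->
  (size (v1 :: P2') <= 2 /\ (forall v : T, (v \in u1 :: P1') || (v \in v1 :: P2'))) \/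
  (3 <= size (v1 :: P2') /\ deg e v1 = 1) \/
  (exists w : T, [/\ w \notin u1 :: P1', w != v1, deg e w <= 2,
        ~~ e u1 w /\ ~~ e (last u1 P1') w & ~ cut_vertex e w]).
Proof.
move=> [esym eirr] Hconn _ Hnc Hham LP1 _ LP2 _.
exact: (main_in esym eirr Hconn Hnc Hham LP1 LP2).
Qed.
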